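(* Let $n\ge 1$ and $k\ge 1$ be integers with $n\ge 2k$. Then: 1. For every $0\le i\le n-2k$, the list $\mathcal{F}(\alpha_{n,k}^i)$ contains every word of $F_n(2,k)$ (so it is a homogeneous Gray code for $F_n(2,k)$), it is suffix partitioned, and its last word is $\gamma_{n,k}$. 2. The list $\mathcal{F}(\gamma_{n,k})$ contains every word of $F_n(2,k)$, it is suffix partitioned, and its last word is $\alpha_{n,k}^0=1(01)^{k-1}0^{n-2k+1}$ if $k$ is even, and $\alpha_{n,k}^{n-2k}=0^{n-2k}1(01)^{k-1}0$ if $k$ is odd.
   Context: The weight of a binary word is its number of 1's. $F_n(2,k)$ is the set of binary words of length $n$ and weight $k$ containing no two consecutive 1's. For $0\le i\le n-2k+1$ let $\alpha_{n,k}^i=0^i1(01)^{k-1}0^{n-2k+1-i}$, and let $\gamma_{n,k}=0^{n-2k}(01)^k$. A homogeneous transposition of a binary word exchanges a 1 and a 0 such that no 1 occurs strictly between the two exchanged positions. For a set $S$ of binary words of the same length and weight and $\alpha\in S$, the list obtained by applying the greedy algorithm for $S$ to $\alpha$ is built as follows: start with the list $(\alpha)$; repeatedly, for the last word $w$ of the current list, among all words obtainable from $w$ by one homogeneous transposition that lie in $S$ and do not already occur in the list, choose the one obtained by transposing the leftmost possible 1 with (among transpositions of that 1) the leftmost possible 0, and append it; stop when no such word exists. $\mathcal{F}(\alpha)$ denotes the list obtained by applying the greedy algorithm for $F_n(2,k)$ to $\alpha\in F_n(2,k)$. A list is suffix partitioned if, for every word $s$, the words of the list having suffix $s$ occupy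 consecutive positions. *)

(* Defs.v *)
(* binary words are [seq bool], position 0 is the leftmost letter. *)
From mathcomp Require Import all_boot.
Set Implicit Arguments. Unset Strict Implicit. Unset Printing Implicit Defensive.

Definition word := seq bool.

Definition weight (w : word) : nat := count id w.

Fixpoint no11 (w : word) : bool :=
  match w with
  | true :: ((true :: _) as _) => false
  | _ :: w' => no11 w'
  | [::] => true
  end.

Definition Fn (n k : nat) : pred word :=
  fun w => [&& size w == n, weight w == k & no11 w].

Definition zeros (m : nat) : word := nseq m false.
Definition zo (m : nat) : word := flatten (nseq m [:: false; true]).

Definition alpha (n k i : nat) : word :=
  zeros i ++ true :: zo (k - 1) ++ zeros (n - 2 * k + 1 - i).

Definition gamma (n k : nat) : word := zeros (n - 2 * k) ++ zo k.

Definition no1between (w : word) (p q : nat) : bool :=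
  all (fun r => ~~ nth false w r) (iota (minn p q).+1 (maxn p q - minn p q).-1).

(* All words obtained from w by one homogeneous transposition, listed in the
   greedy priority order: leftmost 1 first, then (for that 1) leftmost 0. *)
Definition htrans (w : word) : seq word :=
  flatten [seq [seq set_nth false (set_nth false w p false) q true
               | q <- iota 0 (size w) & (~~ nth false w q) && no1between w p q]
          | p <- iota 0 (size w) & nth false w p].

Fixpoint greedy_run (S : pred word) (fuel : nat) (L : seq word) : seq word :=
  match fuel with
  | 0 => L
  | f.+1 =>
      match [seq v <- htrans (last [::] L) | S v && (v \notin L)] with
      | [::] => L
      | v :: _ => greedy_run S f (rcons L v)
      end
  end.

(* The fuel 2^(size alpha) is enough: all words in the list are distinct
   words of length size alpha, so at most 2^(size alpha) - 1 steps occur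
   before the algorithm stops by itself. *)
Definition greedy (S : pred word) (a : word) : seq word :=
  greedy_run S (2 ^ size a) [:: a].

Definition calF (n k : nat) (a : word) : seq word := greedy (Fn n k) a.

Definition suffix_partitioned (L : seq word) : Prop :=
  forall (s : word) (i j l : nat), i <= l -> l <= j -> j < size L ->
    suffix s (nth [::] L i) -> suffix s (nth [::] L j) -> suffix s (nth [::] L l).

(* Main.v *)
Require Import Defs.
From mathcomp Require Import all_boot zify.
Set Implicit Arguments. Unset Strict Implicit. Unset Printing Implicit Defensive.

Lemma greedy_run_S S f L : greedy_run S f.+1 L =
  if [seq v <- htrans (last [::] L) | S v && (v \notin L)] is v :: _
  then greedy_run S f (rcons L v) else L.
Proof. by []. Qed.

Definition stopped S L := [seq v <- htrans (last [::] L) | S v && (v \notin L)] == [::].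

Lemma greedy_run_stopped S f L : stopped S L -> greedy_run S f L = L.
Proof. by case: f => [|f] //= /eqP ->. Qed.

Lemma greedy_run_add S a b L : greedy_run S (a + b) L = greedy_run S b (greedy_run S a L).
Proof.
elim: a L => [|a IH] L //=.
case E: [seq v <- htrans (last [::] L) | S v && (v \notin L)] => [|v r].
  by rewrite greedy_run_stopped // /stopped E.
by rewrite IH.
Qed.

Definition T (w : word) p q := set_nth false (set_nth false w p false) q true.

Definition valid (w : word) p q :=
  [&& p < size w, nth false w p, q < size w, ~~ nth false w q & no1between w p q].

Definition pairs (w : word) : seq (nat * nat) :=
  [seq (p, q) | p <- [seq p <- iota 0 (size w) | nth false w p],
                q <- [seq q <- iota 0 (size w) | (~~ nth false w q) && no1between w p q]].

Lemma htrans_pairs w : htrans w = [seq T w pq.1 pq.2 | pq <- pairs w].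
Proof.
rewrite /htrans /pairs map_flatten -map_comp; congr flatten.
by apply: eq_map => p /=; rewrite -map_comp.
Qed.

Lemma mem_pairs w p q : ((p, q) \in pairs w) = valid w p q.
Proof.
apply/allpairsPdep/idP => [[p' [q' [Hp Hq [-> ->]]]]|].
  move: Hp Hq; rewrite !mem_filter !mem_iota /valid.
  by case/andP=> -> /andP[_ ->] /andP[/andP[-> ->] /andP[_ ->]].
case/and5P=> H1 H2 H3 H4 H5; exists p, q; split => //.
  by rewrite mem_filter H2 mem_iota.
by rewrite mem_filter H4 H5 mem_iota.
Qed.

Definition lexlt (a b : nat * nat) := (a.1 < b.1) || ((a.1 == b.1) && (a.2 < b.2)).

Lemma lexlt_trans : transitive lexlt.
Proof.
move=> [b1 b2] [a1 a2] [c1 c2]; rewrite /lexlt /=.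
case/orP=> [H|/andP[/eqP H H']]; case/orP=> [K|/andP[/eqP K K']]; apply/orP; lia.
Qed.

Lemma lexlt_irr a : lexlt a a = false.
Proof. by rewrite /lexlt ltnn eqxx ltnn. Qed.

Lemma pairwise_allpairs (s : seq nat) (t : nat -> seq nat) :
  pairwise ltn s -> (forall p, pairwise ltn (t p)) ->
  pairwise lexlt [seq (p, q) | p <- s, q <- t p].
Proof.
move=> Hs Ht; elim: s Hs => [|p s IH] //= => /andP[Hp Hs].
rewrite pairwise_cat IH // andbT; apply/andP; split.
  apply/allrelP => a b /mapP[q Hq ->] /allpairsPdep[p' [q' [Hp' _ ->]]].
  by apply/orP; left; exact: (allP Hp _ Hp').
rewrite pairwise_map; move: (Ht p); elim: (t p) => [|q l IHl] //=.
move=> /= /andP[Hq Hl]; rewrite IHl // andbT.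
by apply/allP => x Hx; rewrite /= /lexlt /= eqxx /=; apply/orP; right; exact: (allP Hq _ Hx).
Qed.

Lemma pairwise_pairs w : pairwise lexlt (pairs w).
Proof.
apply: pairwise_allpairs => [|p];
  by rewrite -sorted_pairwise; [apply: sorted_filter; [exact: ltn_trans|exact: iota_ltn_sorted] | exact: ltn_trans].
Qed.

Lemma pairwise_split (A : eqType) (r : rel A) l1 z l2 :
  pairwise r (l1 ++ z :: l2) -> (forall a, a \in l1 -> r a z) /\ (forall b, b \in l2 -> r z b).
Proof.
rewrite pairwise_cat pairwise_cons => /and3P[/allrelP H _ /andP[/allP H2 _]].
by split=> // a Ha; apply: H => //; rewrite inE eqxx.
Qed.

Lemma filter_first (A : Type) (P : pred A) l z r :
  filter P l = z :: r -> exists l1 l2, l = l1 ++ z :: l2 /\ all (predC P) l1.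
Proof.
elim: l => [|a l IH] //=; case: ifP => Pa.
  by case=> <- _; exists [::], l.
move/IH=> [l1 [l2 [-> H]]]; exists (a :: l1), l2; split => //=.
by rewrite Pa.
Qed.

Lemma mem_split (A : eqType) (x : A) l : x \in l -> exists l1 l2, l = l1 ++ x :: l2.
Proof.
move=> Hx; exists (take (index x l) l), (drop (index x l).+1 l).
by rewrite -{1}(cat_take_drop (index x l) l) (drop_nth x) ?index_mem ?nth_index.
Qed.

Lemma fcl w (Q : pred word) p0 q0 :
  valid w p0 q0 -> Q (T w p0 q0) ->
  (forall p q, valid w p q -> lexlt (p, q) (p0, q0) -> ~~ Q (T w p q)) ->
  exists r, [seq v <- htrans w | Q v] = T w p0 q0 :: r.
Proof.
move=> Hv HQ Hb; rewrite htrans_pairs.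
have := Hv; rewrite -mem_pairs => /mem_split [p1 [p2 E]].
move: (pairwise_pairs w); rewrite E => /pairwise_split [H1 _].
rewrite map_cat filter_cat /= HQ.
have -> : [seq v <- [seq T w pq.1 pq.2 | pq <- p1] | Q v] = [::].
  apply/eqP; rewrite -(negbK (_ == _)) -has_filter; apply/hasPn => v /mapP [[p q] Hpq ->].
  apply: Hb; last exact: H1.
  by rewrite -mem_pairs E mem_cat Hpq.
by eexists.
Qed.

Lemma fcl_inv w (Q : pred word) v r :
  [seq u <- htrans w | Q u] = v :: r ->
  exists p0 q0, [/\ valid w p0 q0, v = T w p0 q0, Q v &
    forall p q, valid w p q -> lexlt (p, q) (p0, q0) -> ~~ Q (T w p q)].
Proof.
rewrite htrans_pairs filter_map.
case E: [seq x <- pairs w | preim (fun pq => T w pq.1 pq.2) Q x] => [|[p0 q0] r'] //= [Hv _].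
have [l1 [l2 [E2 Hl1]]] := filter_first E.
have Hz : (p0, q0) \in pairs w by rewrite E2 mem_cat inE eqxx orbT.
have HQ : Q (T w p0 q0).
  by have := mem_head (p0, q0) r'; rewrite -E mem_filter => /andP[].
move: (pairwise_pairs w); rewrite E2 => /pairwise_split [_ H2].
exists p0, q0; split; rewrite -?mem_pairs // -?Hv //.
move=> p q; rewrite -mem_pairs E2 mem_cat inE => /orP[Hin|/orP[/eqP [-> ->]|Hin]] Hlt.
- by have := allP Hl1 _ Hin.
- by rewrite lexlt_irr in Hlt.
- by have := lexlt_trans Hlt (H2 _ Hin); rewrite lexlt_irr.
Qed.

Lemma set_nth_catl (x s : word) i b : i < size x ->
  set_nth false (x ++ s) i b = set_nth false x i b ++ s.
Proof. by elim: x i => [|a x IH] [|i] //= H; rewrite IH. Qed.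

Lemma set_nth_catr (x s : word) i b :
  set_nth false (x ++ s) (size x + i) b = x ++ set_nth false s i b.
Proof. by elim: x => [|a x IH] //=; rewrite IH. Qed.

Lemma size_T w p q : p < size w -> q < size w -> size (T w p q) = size w.
Proof. move=> Hp Hq; rewrite /T !size_set_nth; lia. Qed.

Lemma T_catl x s p q : p < size x -> q < size x -> T (x ++ s) p q = T x p q ++ s.
Proof.
move=> Hp Hq; rewrite /T set_nth_catl // set_nth_catl //.
by rewrite size_set_nth; lia.
Qed.

Lemma nth_T w p q r : p < size w -> q < size w ->
  nth false (T w p q) r = if r == q then true else if r == p then false else nth false w r.
Proof. by move=> Hp Hq; rewrite /T nth_set_nth /= nth_set_nth. Qed.

Lemma no1betweenP w p q :
  reflect (forall r, minn p q < r < maxn p q -> nth false w r = false) (no1between w p q).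
Proof.
apply: (iffP allP) => H r.
  move=> Hr; apply/negbTE/H; rewrite mem_iota; lia.
by rewrite mem_iota => Hr; rewrite H //; lia.
Qed.

Lemma no1between_catl x s p q : p < size x -> q < size x ->
  no1between (x ++ s) p q = no1between x p q.
Proof.
move=> Hp Hq; apply/no1betweenP/no1betweenP => H r Hr; move: (H r Hr);
  rewrite nth_cat ifT //; lia.
Qed.


Lemma valid_catl x s p q : p < size x -> q < size x -> valid (x ++ s) p q = valid x p q.
Proof. by move=> Hp Hq; rewrite /valid no1between_catl // !nth_cat size_cat Hp Hq /= !ltn_addr. Qed.

Lemma valid_lt w p q : valid w p q -> p < size w /\ q < size w.
Proof. by case/and5P. Qed.

Lemma last_map_cat (P : seq word) (Lx : seq word) s :
  Lx != [::] -> last [::] (P ++ map (cat^~ s) Lx) = last [::] Lx ++ s.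
Proof. by case: Lx => [|x0 t] //= _; rewrite last_cat /= (last_map (cat^~ s)). Qed.

Section Block.
Variables (S S' : pred word) (s : word) (P : seq word).
Hypothesis HS : forall y, S (y ++ s) = S' y.
Hypothesis HP : forall y, y ++ s \notin P.

Lemma cats_inj : injective (cat^~ s).
Proof.
move=> y1 y2 /= E; have := congr1 (fun u => take (size u - size s) u) E.
by rewrite /= !size_cat !addnK !take_size_cat.
Qed.

Lemma Qeq Lx y : (S (y ++ s) && (y ++ s \notin P ++ map (cat^~ s) Lx)) =
  (S' y && (y \notin Lx)).
Proof. by rewrite HS mem_cat (negbTE (HP y)) /= (mem_map cats_inj). Qed.

Lemma block_step Lx0 v r : Lx0 != [::] ->
  [seq u <- htrans (last [::] Lx0) | S' u && (u \notin Lx0)] = v :: r ->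
  exists r', [seq u <- htrans (last [::] (P ++ map (cat^~ s) Lx0)) |
                S u && (u \notin P ++ map (cat^~ s) Lx0)] = (v ++ s) :: r'.
Proof.
move=> Hne; rewrite last_map_cat //; set x := last [::] Lx0 => Hf.
have [p0 [q0 [Hv Ev HQ Hb]]] := fcl_inv Hf.
have [Hp0 Hq0] := valid_lt Hv.
have Ev' : v ++ s = T (x ++ s) p0 q0 by rewrite T_catl // Ev.
rewrite Ev'; apply: fcl => [|/=|p q Hpq Hlt].
- by rewrite valid_catl.
- by rewrite -Ev' Qeq.
have [Hp Hq] : p < size x /\ q < size x.
  move: Hlt; rewrite /lexlt /= => /orP [H|/andP [/eqP H H']]; last by split; lia.
  split; first lia.
  rewrite ltnNge; apply/negP => Hq.
  move/and5P: Hpq => [_ _ _ _ /no1betweenP Hnb].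
  have := Hnb p0; rewrite nth_cat Hp0.
  by case/and5P: Hv => _ -> _ _ _ /(_ ltac:(lia)).
rewrite T_catl // Qeq; apply: Hb => //.
by rewrite -(valid_catl s).
Qed.

Lemma block_run m Lx0 Lx : Lx0 != [::] -> greedy_run S' m Lx0 = Lx ->
  size Lx = size Lx0 + m ->
  greedy_run S m (P ++ map (cat^~ s) Lx0) = P ++ map (cat^~ s) Lx.
Proof.
elim: m Lx0 => [|m IH] Lx0 Hne.
  by move=> /= ->.
rewrite greedy_run_S.
case E: [seq v <- htrans (last [::] Lx0) | S' v && (v \notin Lx0)] => [|v r].
  by move=> <- /eqP; rewrite -{1}[size Lx0]addn0 eqn_add2l.
move=> Hrun Hsz.
have [r' E'] := block_step Hne E.
rewrite greedy_run_S E' rcons_cat -(map_rcons (cat^~ s)); apply: IH => //.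
  by case: (Lx0).
by rewrite size_rcons; lia.
Qed.

End Block.

Lemma sp_rcons b (L : seq word) : suffix_partitioned L ->
  suffix_partitioned (map (rcons^~ b) L).
Proof.
move=> H s i j l Hil Hlj; rewrite size_map => Hj.
rewrite !(nth_map [::]); try lia.
case/lastP: s => [|s' c]; first by move=> *; apply: suffix0s.
rewrite !suffix_rcons => /andP[/eqP-> Hi] /andP[_ Hjj].
by rewrite eqxx (H _ i j l).
Qed.

Lemma sp_cats s (L : seq word) : suffix_partitioned L ->
  suffix_partitioned (map (cat^~ s) L).
Proof.
elim/last_ind: s L => [|s b IH] L H.
  by rewrite (eq_map (g := id)) ?map_id // => y; rewrite /= cats0.
have -> : map (cat^~ (rcons s b)) L = map (rcons^~ b) (map (cat^~ s) L).
  by rewrite -map_comp; apply: eq_map => y /=; rewrite -!cats1 catA.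
by apply: sp_rcons; apply: IH.
Qed.

Lemma sp_cat (L1 L2 : seq word) : suffix_partitioned L1 -> suffix_partitioned L2 ->
  (forall s u v, u \in L1 -> v \in L2 -> suffix s u -> suffix s v -> s = [::]) ->
  suffix_partitioned (L1 ++ L2).
Proof.
move=> H1 H2 H s i j l Hil Hlj; rewrite size_cat => Hj; rewrite !nth_cat.
case: (ltnP j (size L1)) => Hj1.
  have Ei : (i < size L1) = true by lia. rewrite ?Ei.
  have El : (l < size L1) = true by lia. rewrite ?El.
  have Ej : (j < size L1) = true by lia. rewrite ?Ej.
  exact: H1.
case: (ltnP i (size L1)) => Hi1.
  have Ej : (j < size L1) = false by lia. rewrite ?Ej.
  move=> Hsi Hsj.
  have Hj2 : j - size L1 < size L2 by lia.
  by rewrite (H s _ _ (mem_nth [::] Hi1) (mem_nth [::] Hj2) Hsi Hsj) suffix0s.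
have Ej : (j < size L1) = false by lia. rewrite ?Ej.
have El : (l < size L1) = false by lia. rewrite ?El.
apply: (H2 s (i - size L1) (j - size L1)). all: try lia; exact: leq_sub2r.
Qed.

Definition Good (n : nat) (S : pred word) (x0 : word) (L : seq word) (z : word) :=
  [/\ S x0, exists m, greedy_run S m [:: x0] = L /\ size L = m.+1,
      forall u, S u -> u \in L, suffix_partitioned L & last [::] L = z /\ size L <= 2 ^ n].

Lemma Good_single n (S : pred word) x : S x -> (forall u, S u -> u = x) ->
  Good n S x [:: x] x.
Proof.
move=> Hx Hu; split.
- exact: Hx.
- by exists 0.
- by move=> u /Hu ->; rewrite inE.
- move=> s i j l Hil Hlj /= Hj.
  have -> : l = i by lia.
  by [].
- by split; rewrite //= expn_gt0.
Qed.

Lemma Good_compose n n1 n2 (S S1 S2 : pred word) s1 s2 x0 L1 z1 x1 L2 z2 :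
  Good n1 S1 x0 L1 z1 -> Good n2 S2 x1 L2 z2 ->
  (forall y, S (y ++ s1) = S1 y) -> (forall y, S (y ++ s2) = S2 y) ->
  (forall u, S u -> (exists y, u = y ++ s1) \/ (exists y, u = y ++ s2)) ->
  (forall y y', y ++ s1 != y' ++ s2) ->
  (forall t u v, suffix t (u ++ s1) -> suffix t (v ++ s2) -> t = [::]) ->
  (exists r, [seq u <- htrans (z1 ++ s1) | S u && (u \notin map (cat^~ s1) L1)]
     = (x1 ++ s2) :: r) ->
  2 ^ n1 + 2 ^ n2 <= 2 ^ n ->
  Good n S (x0 ++ s1) (map (cat^~ s1) L1 ++ map (cat^~ s2) L2) (z2 ++ s2).
Proof.
move=> [Sx0 [m1 [R1 Z1]] C1 P1 [E1 B1]] [Sx1 [m2 [R2 Z2]] C2 P2 [E2 B2]].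
move=> H1 H2 Hcov Hdisj Hsuf [r Htr] Hpow.
have ne1 : L1 != [::] by case: (L1) Z1.
have ne2 : L2 != [::] by case: (L2) Z2.
split.
- by rewrite H1.
- exists (m1 + m2.+1); split; last by rewrite size_cat !size_map Z1 Z2; lia.
  rewrite greedy_run_add.
  have -> : greedy_run S m1 [:: x0 ++ s1] = map (cat^~ s1) L1.
    have := @block_run S S1 s1 [::] H1 (fun y => erefl true) m1 [:: x0] L1 erefl R1.
    by rewrite /= Z1 => ->.
  rewrite greedy_run_S.
  have -> : last [::] (map (cat^~ s1) L1) = z1 ++ s1.
    by rewrite -(cat0s (map _ _)) last_map_cat // E1.
  rewrite Htr -cats1.
  have -> : [:: x1 ++ s2] = map (cat^~ s2) [:: x1] by [].
  apply: block_run => //.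
  + move=> y; apply/mapP => [[y' _ E]]; move: (Hdisj y' y); by rewrite E eqxx.
- move=> u Su; case: (Hcov u Su) => [[y Ey]|[y Ey]]; rewrite Ey mem_cat; rewrite Ey in Su.
  + by rewrite (mem_map (@cats_inj s1)) C1 // -H1.
  + by rewrite (mem_map (@cats_inj s2)) C2 ?orbT // -H2.
- apply: sp_cat; [exact: sp_cats | exact: sp_cats |].
  by move=> t u v /mapP [y _ ->] /mapP [y' _ ->]; apply: Hsuf.
split.
- by rewrite last_map_cat // E2.
- by rewrite size_cat !size_map; apply: leq_trans Hpow; exact: leq_add.
Qed.

Lemma Good_calF n k a L z : Good n (Fn n k) a L z -> size a = n -> calF n k a = L.
Proof.
move=> [Sa [m [R Z]] C _ [_ B]] Hs.
rewrite /calF /greedy Hs -(subnKC (_ : m <= 2 ^ n)); last lia.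
rewrite greedy_run_add R greedy_run_stopped // /stopped.
rewrite (eq_filter (a2 := pred0)) ?filter_pred0 // => v /=.
by case Sv: (Fn n k v) => //=; rewrite C.
Qed.

Definition W (y : word) c m d : word := y ++ c :: zeros m ++ [:: d].

Lemma size_zeros m : size (zeros m) = m. Proof. exact: size_nseq. Qed.

Lemma size_W y c m d : size (W y c m d) = size y + m.+2.
Proof. by rewrite /W size_cat /= size_cat size_zeros /=; lia. Qed.

Lemma nth_W y c m d r : nth false (W y c m d) r =
  if r < size y then nth false y r else if r == size y then c
  else if r == size y + m.+1 then d else false.
Proof.
rewrite /W nth_cat; case: ifP => // Hr.
case E: (r - size y) => [|j].
  by have -> : r == size y by lia.
have -> : (r == size y) = false by lia.
rewrite /= nth_cat size_zeros nth_nseq if_same.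
case: (ltnP j m) => Hj.
  by have -> : (r == size y + m.+1) = false by lia.
case E2: (j - m) => [|i] /=.
  by have -> : (r == size y + m.+1) = true by lia.
have -> : (r == size y + m.+1) = false by lia.
by case: i E2.
Qed.

Lemma set_nth_catR (x s : word) j b : size x <= j ->
  set_nth false (x ++ s) j b = x ++ set_nth false s (j - size x) b.
Proof. by move=> H; rewrite -{1}(subnKC H) set_nth_catr. Qed.

Lemma set_nth_zeros_last t : set_nth false (zeros t ++ [:: false]) t true = zeros t ++ [:: true].
Proof. by rewrite set_nth_catR size_zeros // subnn. Qed.

Lemma no11_cons a u : no11 (a :: u) -> no11 u.
Proof. by case: a; case: u => [|[] u]. Qed.

Lemma no11_nth u i : no11 u -> nth false u i -> nth false u i.+1 -> False.
Proof.
elim: u i => [|a u IH] [|i] //=.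
  by case: a; case: u IH => [|[] u].
by move/no11_cons; apply: IH.
Qed.

Lemma trans1 y t (Q : pred word) :
  (forall u, size u = size y + t.+1 -> ~~ Q (u ++ [:: false])) ->
  Q (W y false t true) ->
  exists r, [seq v <- htrans (W y true t false) | Q v] = W y false t true :: r.
Proof.
move=> Hin HQ.
have ET : T (W y true t false) (size y) (size y + t.+1) = W y false t true.
  rewrite /T /W set_nth_catR // subnn /= set_nth_catR; last lia.
  have -> : size y + t.+1 - size y = t.+1 by lia.
  by rewrite /= set_nth_zeros_last.
rewrite -ET; apply: fcl; rewrite ?ET //.
  rewrite /valid size_W !nth_W ltnn eqxx /=.
  have -> : (size y + t.+1 < size y) = false by lia.
  have -> : (size y + t.+1 == size y) = false by lia.
  rewrite eqxx /=; apply/andP; split; first lia.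
  apply/andP; split; first lia.
  apply/no1betweenP => r Hr; rewrite nth_W.
  have -> : (r < size y) = false by lia.
  have -> : (r == size y) = false by lia.
  by have -> : (r == size y + t.+1) = false by lia.
move=> p q /and5P[Hp Np Hq Nq NB] Hlt.
have Ew : W y true t false = (y ++ true :: zeros t) ++ [:: false] by rewrite /W -catA.
have Hp' : p < size y + t.+1 by move: Hlt; rewrite /lexlt /=; lia.
move: Hp Hq; rewrite size_W => Hp Hq.
case: (ltnP q (size y + t.+1)) => Hq'.
  rewrite Ew T_catl ?size_cat /= ?size_zeros; try lia.
  by apply: Hin; rewrite size_T ?size_cat /= ?size_zeros; lia.
have Eq : q = size y + t.+1 by lia.
have Hpy : p < size y by move: Hlt; rewrite /lexlt /= Eq; lia.
move/no1betweenP: NB => /(_ (size y)); rewrite nth_W ltnn eqxx => H.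
have : true = false by apply: H; lia.
by [].
Qed.

Lemma zerosSr m : zeros m.+1 = zeros m ++ [:: false].
Proof. by rewrite /zeros -addn1 nseqD. Qed.

Lemma nth_T_notin w p q r : p < size w -> q < size w -> r != p -> r != q ->
  nth false (T w p q) r = nth false w r.
Proof. by move=> Hp Hq Hrp Hrq; rewrite nth_T // (negbTE Hrp) (negbTE Hrq). Qed.

Lemma trans2 y t (Q : pred word) :
  (forall u, size u = size y + t.+2 -> ~~ Q (u ++ [:: false; true])) ->
  (forall u, Q u -> no11 u) ->
  Q (W (y ++ [:: true; false]) true t false) ->
  exists r, [seq v <- htrans (W y true t.+2 true) | Q v] = W (y ++ [:: true; false]) true t false :: r.
Proof.
move=> Hin Hno HQ.
have ET : T (W y true t.+2 true) (size y + t.+3) (size y + 2) = W (y ++ [:: true; false]) true t false.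
  rewrite /T /W set_nth_catR; last lia.
  have -> : size y + t.+3 - size y = t.+3 by lia.
  rewrite /= (@set_nth_catR (zeros t)) ?size_zeros // subnn /=.
  rewrite set_nth_catR; last lia.
  have -> : size y + 2 - size y = 2 by lia.
  by rewrite -catA.
rewrite -ET; apply: fcl; rewrite ?ET //.
  rewrite /valid size_W !nth_W.
  have -> : (size y + t.+3 < size y) = false by lia.
  have -> : (size y + t.+3 == size y) = false by lia.
  have -> : (size y + 2 < size y) = false by lia.
  have -> : (size y + 2 == size y) = false by lia.
  have -> : (size y + 2 == size y + t.+3) = false by lia.
  rewrite eqxx /=; apply/andP; split; first lia.
  apply/andP; split; first lia.
  apply/no1betweenP => r Hr; rewrite nth_W.
  have -> : (r < size y) = false by lia.
  have -> : (r == size y) = false by lia.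
  by have -> : (r == size y + t.+3) = false by lia.
have Ew : W y true t.+2 true = (y ++ true :: false :: zeros t) ++ [:: false; true].
  rewrite /W -catA /=; congr (_ ++ _); do 2 congr (_ :: _).
  by clear; elim: t => //= t ->.
have Hsw := size_W y true t.+2 true.
move=> p q /and5P[Hp Np Hq Nq NB] Hlt.
rewrite Hsw in Hp Hq.
have NQ : forall i, i.+1 < size y + t.+4 -> nth false (T (W y true t.+2 true) p q) i ->
          nth false (T (W y true t.+2 true) p q) i.+1 -> ~~ Q (T (W y true t.+2 true) p q).
  by move=> i Hi N1 N2; apply/negP => /Hno /no11_nth /(_ N1 N2).
have Hny : minn p q < size y < maxn p q -> False.
  by move/no1betweenP: NB => /(_ (size y)); rewrite nth_W ltnn eqxx => H /H.
move: Np Nq; rewrite !nth_W => Np Nq.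
case: (ltnP p (size y + t.+2)) => Hp2.
  case: (ltnP q (size y + t.+2)) => Hq2.
    rewrite Ew T_catl ?size_cat /= ?size_zeros; try lia.
    by apply: Hin; rewrite size_T ?size_cat /= ?size_zeros; lia.
  case: (ltnP p (size y)) => Hpy.
    by exfalso; apply: Hny; lia.
  case E: (p == size y); last first.
    move: Np; have -> : (p < size y) = false by lia.
    by rewrite E; have -> : (p == size y + t.+3) = false by lia.
  move/eqP: E => E.
  case E2: (q == size y + t.+3).
    move: Nq; have -> : (q < size y) = false by lia.
    have -> : (q == size y) = false by lia.
    by rewrite E2.
  apply: (NQ q); first lia.
    by rewrite nth_T ?Hsw ?eqxx //; lia.
  rewrite nth_T_notin ?Hsw; try lia.
  rewrite nth_W.
  have -> : (q.+1 < size y) = false by lia.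
  have -> : (q.+1 == size y) = false by lia.
  by have -> : (q.+1 == size y + t.+3) = true by lia.
have Ep : p = size y + t.+3.
  move: Np; have -> : (p < size y) = false by lia.
  have -> : (p == size y) = false by lia.
  by case: eqP => //; lia.
have Hq3 : q < size y + 2 by move: Hlt; rewrite /lexlt /= Ep; lia.
case: (ltnP q (size y)) => Hqy.
  by exfalso; apply: Hny; lia.
case E: (q == size y).
  move: Nq; have -> : (q < size y) = false by lia.
  by rewrite E.
apply: (NQ (size y)); first lia.
  rewrite nth_T_notin ?Hsw; try lia.
  by rewrite nth_W ltnn eqxx.
rewrite nth_T ?Hsw; try lia.
by have -> : (size y).+1 == q by lia.
Qed.

Lemma trans2' a (Q : pred word) :
  Q (W [::] true a false) ->
  exists r, [seq v <- htrans (W [::] false a true) | Q v] = W [::] true a false :: r.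
Proof.
move=> HQ.
have ET : T (W [::] false a true) a.+1 0 = W [::] true a false.
  by rewrite /T /W /= set_nth_catR size_zeros // subnn.
rewrite -ET; apply: fcl; rewrite ?ET //.
  rewrite /valid size_W !nth_W /= eqxx /=.
  apply/andP; split; first lia.
  apply/no1betweenP => r Hr; rewrite nth_W /=.
  have -> : (r == 0) = false by lia.
  by have -> : (r == a.+1) = false by lia.
move=> p q /and5P[Hp Np Hq Nq NB] Hlt.
move: Np; rewrite nth_W /=.
have -> : (p == a.+1) = false by move: Hlt; rewrite /lexlt /=; lia.
by case: (p == 0).
Qed.

Lemma no11_cat_false x t : no11 (x ++ false :: t) = no11 x && no11 t.
Proof.
elim: x => [|a x IH] //=.
case: a; case: x IH => [|b x] IH //=.
by case: b IH.
Qed.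

Lemma weight_cat x y : weight (x ++ y) = weight x + weight y.
Proof. exact: count_cat. Qed.

Lemma Fn_cat0 n k y : 0 < n -> Fn n k (y ++ [:: false]) = Fn (n - 1) k y.
Proof.
move=> Hn; rewrite /Fn size_cat weight_cat no11_cat_false andbT /= addn0.
rewrite addn0; congr andb; apply/idP/idP => /eqP H; apply/eqP; lia.
Qed.

Lemma Fn_cat01 n k y : 1 < n -> 0 < k -> Fn n k (y ++ [:: false; true]) = Fn (n - 2) (k - 1) y.
Proof.
move=> Hn Hk; rewrite /Fn size_cat weight_cat no11_cat_false andbT /=.
have -> : (size y + 2 == n) = (size y == n - 2) by apply/idP/idP => /eqP H; apply/eqP; lia.
by have -> : (weight y + 1 == k) = (weight y == k - 1) by apply/idP/idP => /eqP H; apply/eqP; lia.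
Qed.

Lemma Fn_no11 n k u : Fn n k u -> no11 u.
Proof. by case/and3P. Qed.

Lemma Fn_cover n k u : 1 < n -> Fn n k u ->
  (exists y, u = y ++ [:: false]) \/ (exists y, u = y ++ [:: false; true]).
Proof.
move=> Hn; case/lastP: u => [|u b] /and3P[Hs Hw Hno].
  by move: Hs => /eqP /= E; lia.
case: b Hs Hno Hw => Hs Hno Hw; last by left; exists u; rewrite cats1.
case/lastP: u Hs Hno Hw => [|u c] Hs Hno Hw.
  by move: Hs => /eqP /= E; lia.
case: c Hs Hno Hw => Hs Hno Hw.
  exfalso; apply: (no11_nth (i := size u) Hno).
    by rewrite !nth_rcons size_rcons ltnn eqxx ltnSn.
  by rewrite !nth_rcons size_rcons ltnNge leqnn /= eqxx.
by right; exists u; rewrite -!cats1 -catA.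
Qed.

Lemma disj01 y y' : y ++ [:: false] != y' ++ [:: false; true].
Proof. by apply/eqP => /(congr1 (last false)); rewrite !last_cat. Qed.

Lemma suf01 t u v : suffix t (u ++ [:: false]) -> suffix t (v ++ [:: false; true]) -> t = [::].
Proof.
case/lastP: t => [|t c] //.
have -> : v ++ [:: false; true] = rcons (v ++ [:: false]) true by rewrite -cats1 -catA.
rewrite cats1 !suffix_rcons => /andP[/eqP -> _] /andP[].
by [].
Qed.

Lemma zerosE m : zeros m.+1 = false :: zeros m. Proof. by []. Qed.

Lemma catzS m s : zeros m ++ false :: s = zeros m.+1 ++ s.
Proof. by elim: m => //= m ->. Qed.

Lemma zeros_add m1 m2 : zeros (m1 + m2) = zeros m1 ++ zeros m2.
Proof. exact: nseqD. Qed.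

Lemma zoS m : zo m.+1 = false :: true :: zo m. Proof. by []. Qed.

Lemma zoSr m : zo m.+1 = zo m ++ [:: false; true].
Proof. elim: m => [|m IH] //. by rewrite (zoS m.+1) [in LHS]IH. Qed.

Lemma size_zo m : size (zo m) = 2 * m.
Proof. elim: m => //= m ->; lia. Qed.

Lemma weight_zo m : weight (zo m) = m.
Proof. elim: m => //= m; rewrite /weight /= => ->. by []. Qed.

Lemma no11_tzo m : no11 (true :: zo m).
Proof. by elim: m. Qed.

Lemma gammaE k d : gamma (2 * k + d) k = zeros d ++ zo k.
Proof. by rewrite /gamma; have -> : 2 * k + d - 2 * k = d by lia. Qed.

Lemma alphaE K d i : alpha (2 * K.+1 + d) K.+1 i = zeros i ++ true :: zo K ++ zeros (d.+1 - i).
Proof.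
rewrite /alpha; have -> : K.+1 - 1 = K by lia.
by have -> : 2 * K.+1 + d - 2 * K.+1 + 1 - i = d.+1 - i by lia.
Qed.

Lemma Fn_zeros m u : Fn m 0 u = (u == zeros m).
Proof.
apply/idP/eqP => [/and3P[/eqP Hs Hw _]|->].
  elim: u m Hs Hw => [|a u IH] [|m] //= [Hs]; rewrite /weight /=.
  by case: a => //= Hw; rewrite (IH m).
rewrite /Fn size_zeros eqxx /=.
by elim: m.
Qed.

Lemma weight_bound u : no11 u -> 2 * weight u <= size u + 1.
Proof.
elim: {u}(size u) {-2}u (leqnn (size u)) => [|N IH] u.
  by case: u.
case: u => [|a u] //= Hs Hno.
case: a Hno => Hno; last first.
  have := IH u (ltnSE Hs) Hno; rewrite /weight /=; lia.
case: u Hs Hno => [|b u] //= Hs.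
case: b => //= Hno.
have := IH u ltac:(simpl in Hs; lia) Hno; rewrite /weight /=; lia.
Qed.

Lemma Fn_tzo K u : Fn (2 * K + 1) K.+1 u = (u == true :: zo K).
Proof.
apply/idP/eqP => [/and3P[/eqP Hs /eqP Hw Hno]|->]; last first.
  rewrite /Fn no11_tzo andbT; apply/andP; split; apply/eqP.
    by rewrite /= size_zo; lia.
  by rewrite /weight /= -/(weight (zo K)) weight_zo add1n.
elim: K u Hs Hw Hno => [|K IH] [|a u] //=.
  move=> Hs Hw _; case: u Hs Hw => [|b u] /= Hs Hw; last by exfalso; lia.
  by case: a Hw.
case: a => [|] [Hs] Hw Hno.
  case: u Hs Hw Hno => [|b u] //= Hs Hw Hno.
  case: b Hw Hno => Hw Hno //.
  rewrite (IH u) //.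
    by move: Hs; lia.
  by move: Hw; rewrite /weight /=; lia.
have := weight_bound Hno; move: Hw; rewrite /weight /= => Hw; lia.
Qed.

Lemma pow_ok n : 1 < n -> 2 ^ (n - 1) + 2 ^ (n - 2) <= 2 ^ n.
Proof.
move=> Hn; have [m ->] : exists m, n = m.+2 by exists (n - 2); lia.
have -> : m.+2 - 1 = m.+1 by lia.
have -> : m.+2 - 2 = m by lia.
rewrite !expnS; lia.
Qed.

Lemma composeA n k x0 L1 z1 x1 L2 z2 y t :
  1 < n -> 0 < k ->
  Good (n - 1) (Fn (n - 1) k) x0 L1 z1 -> Good (n - 2) (Fn (n - 2) (k - 1)) x1 L2 z2 ->
  z1 = y ++ true :: zeros t -> x1 ++ [:: false; true] = W y false t true ->
  Good n (Fn n k) (x0 ++ [:: false])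
    (map (cat^~ [:: false]) L1 ++ map (cat^~ [:: false; true]) L2) (z2 ++ [:: false; true]).
Proof.
move=> Hn Hk G1 G2 Ez1 Ex1.
have C1 := G1; case: C1 => _ _ C1 _ _.
have Sx1 := G2; case: Sx1 => Sx1 _ _ _ _.
apply: (Good_compose G1 G2) => //.
- by move=> u; rewrite Fn_cat0 //; lia.
- by move=> u; rewrite Fn_cat01.
- by move=> u; apply: Fn_cover.
- exact: disj01.
- exact: suf01.
- rewrite Ez1; have -> : (y ++ true :: zeros t) ++ [:: false] = W y true t false by rewrite /W -catA.
  rewrite Ex1; apply: trans1.
    move=> u _; rewrite Fn_cat0; last lia.
    case E: (Fn (n - 1) k u) => //=; rewrite negbK.
    by apply: (map_f (cat^~ [:: false])); exact: C1.
  rewrite -Ex1 Fn_cat01 // Sx1 /=; apply/mapP => [[v _ E]].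
  by move: (disj01 v x1); rewrite E eqxx.
- exact: pow_ok.
Qed.

Lemma W2E y t : (y ++ true :: false :: zeros t) ++ [:: false; true] = W y true t.+2 true.
Proof.
rewrite /W -catA /=; congr (_ ++ _); do 2 congr (_ :: _).
by elim: t => //= t ->.
Qed.

Lemma composeG n k x0 L1 z1 x1 L2 z2 :
  1 < n -> 0 < k ->
  Good (n - 2) (Fn (n - 2) (k - 1)) x0 L1 z1 -> Good (n - 1) (Fn (n - 1) k) x1 L2 z2 ->
  ((exists y t, z1 = y ++ true :: false :: zeros t /\
      x1 ++ [:: false] = W (y ++ [:: true; false]) true t false) \/
   (exists a, z1 = zeros a /\ x1 ++ [:: false] = W [::] true a false)) ->
  Good n (Fn n k) (x0 ++ [:: false; true])
    (map (cat^~ [:: false; true]) L1 ++ map (cat^~ [:: false]) L2) (z2 ++ [:: false]).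
Proof.
move=> Hn Hk G1 G2 Htr.
have C1 := G1; case: C1 => _ _ C1 _ _.
have Sx1 := G2; case: Sx1 => Sx1 _ _ _ _.
have HQ : (Fn n k (x1 ++ [:: false])) &&
          (x1 ++ [:: false] \notin map (cat^~ [:: false; true]) L1).
  rewrite Fn_cat0; last lia.
  rewrite Sx1 /=; apply/mapP => [[v _ E]].
  by move: (disj01 x1 v); rewrite E eqxx.
have Hin : forall u, ~~ (Fn n k (u ++ [:: false; true]) &&
               (u ++ [:: false; true] \notin map (cat^~ [:: false; true]) L1)).
  move=> u; rewrite Fn_cat01 //.
  case E: (Fn (n - 2) (k - 1) u) => //=; rewrite negbK.
  by apply: (map_f (cat^~ [:: false; true])); exact: C1.
apply: (Good_compose G1 G2) => //.
- by move=> u; rewrite Fn_cat01.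
- by move=> u; rewrite Fn_cat0 //; lia.
- by move=> u Su; case: (Fn_cover Hn Su) => H; [right|left].
- by move=> u v; rewrite eq_sym disj01.
- by move=> s u v A B; exact: suf01 B A.
- case: Htr => [[y [t [Ez1 Ex1]]]|[a [Ez1 Ex1]]]; rewrite Ez1.
    rewrite W2E Ex1; apply: trans2 => //.
      by move=> u /andP[/Fn_no11].
    by rewrite -Ex1.
  have -> : zeros a ++ [:: false; true] = W [::] false a true.
    by rewrite /W /=; clear; elim: a => //= a ->.
  by rewrite Ex1; apply: trans2'; rewrite -Ex1.
- have := pow_ok Hn; lia.
Qed.

Definition Y K : word := if K is K'.+1 then true :: zo K' ++ [:: false] else [::].

Lemma tzoY K : true :: zo K = Y K ++ [:: true].
Proof. by case: K => [|K] //=; rewrite zoSr -catA. Qed.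

Lemma YS' K R : Y K.+1 ++ true :: R = Y K ++ true :: false :: true :: R.
Proof.
have E : Y K.+1 ++ [:: true] = Y K ++ [:: true; false; true].
  by rewrite -tzoY zoSr -cat_cons tzoY -catA.
by rewrite -cat1s catA E -catA.
Qed.

Lemma zeros_ft t : zeros t ++ [:: false; true] = false :: zeros t ++ [:: true].
Proof. by elim: t => //= t ->. Qed.

Lemma alpY K i m : zeros i ++ true :: zo K ++ zeros m = zeros i ++ Y K ++ true :: zeros m.
Proof. by rewrite -cat_cons tzoY -catA. Qed.

Definition jj K d := if odd K.+1 then d else 0.

Definition PAN N K d := forall i, i <= d -> exists L,
  Good N (Fn N K.+1) (zeros i ++ Y K ++ true :: zeros (d.+1 - i)) L (zeros d ++ zo K.+1).
Definition PGN N K d := exists L,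
  Good N (Fn N K.+1) (zeros d ++ zo K.+1) L (zeros (jj K d) ++ Y K ++ true :: zeros (d.+1 - jj K d)).

Lemma E2 d K : zeros d ++ zo K.+1 = (zeros d ++ zo K) ++ [:: false; true].
Proof. by rewrite zoSr catA. Qed.

Lemma E7 j K t : (zeros j ++ Y K ++ zeros t) ++ [:: false; true] = W (zeros j ++ Y K) false t true.
Proof. by rewrite /W -!catA zeros_ft. Qed.

Lemma single_tzo N K : N = 2 * K + 1 ->
  Good N (Fn N K.+1) (true :: zo K) [:: true :: zo K] (true :: zo K).
Proof. by move=> ->; apply: Good_single; [rewrite Fn_tzo | move=> u; rewrite Fn_tzo => /eqP]. Qed.

Lemma single_zeros N d : N = d -> Good N (Fn N 0) (zeros d) [:: zeros d] (zeros d).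
Proof. by move=> ->; apply: Good_single; [rewrite Fn_zeros | move=> u; rewrite Fn_zeros => /eqP]. Qed.

Lemma YtR K R : Y K ++ true :: R = true :: zo K ++ R.
Proof. by rewrite -cat1s catA -tzoY. Qed.

Lemma eqB01 j K' d : j <= d ->
  zeros j ++ Y K'.+1 ++ zeros (d - j) = zeros j ++ Y K' ++ true :: zeros (d.+1 - j).
Proof.
move=> Hj; have -> : d.+1 - j = (d - j).+1 by lia.
by rewrite YtR /= -catA.
Qed.

Lemma mainN N : forall K d, 2 * K.+1 + d = N -> PAN N K d /\ PGN N K d.
Proof.
elim/ltn_ind: N => N IH K d EN.
have Hn : 1 < N by lia.
have Hk : 0 < K.+1 by [].
have B01 : forall j, j <= d -> exists L, Good (N - 2) (Fn (N - 2) (K.+1 - 1))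
    (zeros j ++ Y K ++ zeros (d - j)) L (zeros d ++ zo K).
  move=> j Hj; have -> : K.+1 - 1 = K by lia.
  case: (K) EN => [|K'] EN.
    exists [:: zeros d]; rewrite /= cats0 -zeros_add subnKC //.
    by apply: single_zeros; lia.
  have [HA _] := IH (N - 2) ltac:(lia) K' d ltac:(lia).
  have [L HL] := HA j Hj; exists L.
  by rewrite eqB01.
split.
- move=> i Hi; rewrite E2.
  case: d Hi EN B01 => [|d'] Hi EN B01.
    have -> : i = 0 by lia.
    have [L2 G2] := B01 0 (leq0n _).
    have -> : zeros 0 ++ Y K ++ true :: zeros (0.+1 - 0) = (true :: zo K) ++ [:: false].
      by rewrite /= -cat_cons tzoY -catA.
    eexists; apply: (composeA (y := Y K) (t := 0) Hn Hk (single_tzo _) G2).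
    + lia.
    + by rewrite tzoY.
    + by rewrite E7.
  case: (ltnP i d'.+1) => Hid.
    have [HA _] := IH (N - 1) ltac:(lia) K d' ltac:(lia).
    have [L1 G1] := HA i ltac:(lia).
    have [L2 G2] := B01 d'.+1 (leqnn _).
    have -> : zeros i ++ Y K ++ true :: zeros (d'.+2 - i) =
              (zeros i ++ Y K ++ true :: zeros (d'.+1 - i)) ++ [:: false].
      have -> : d'.+2 - i = (d'.+1 - i).+1 by lia.
      by rewrite zerosSr -!catA.
    eexists; apply: (composeA (y := zeros d'.+1 ++ Y K) (t := d'.+1 - d'.+1) Hn Hk G1 G2).
    + by rewrite subnn (zoS K) tzoY catzS catA.
    + by rewrite E7.
  have -> : i = d'.+1 by lia.
  have [_ [L1 G1]] := IH (N - 1) ltac:(lia) K d' ltac:(lia).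
  have Hj : jj K d' <= d'.+1 by rewrite /jj; case: ifP; lia.
  have [L2 G2] := B01 (jj K d') Hj.
  have -> : zeros d'.+1 ++ Y K ++ true :: zeros (d'.+2 - d'.+1) =
            (zeros d' ++ zo K.+1) ++ [:: false].
    have -> : d'.+2 - d'.+1 = 1 by lia.
    by rewrite (zoS K) tzoY catzS -!catA.
  eexists; apply: (composeA (y := zeros (jj K d') ++ Y K) (t := d'.+1 - jj K d') Hn Hk G1 G2).
  + by rewrite catA.
  + by rewrite E7.
- rewrite /PGN E2.
  case: K IH EN B01 Hk => [|K'] IH EN B01 Hk.
    have G1 : Good (N - 2) (Fn (N - 2) (1 - 1)) (zeros d ++ zo 0) [:: zeros d] (zeros d).
      by rewrite [zeros d ++ zo 0]cats0; apply: single_zeros; lia.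
    case: d EN G1 B01 => [|d'] EN G1 B01.
      have G2 := @single_tzo (N - 1) 0 ltac:(lia).
      eexists; apply: (composeG Hn Hk G1 G2).
      by right; exists 0.
    have [HA _] := IH (N - 1) ltac:(lia) 0 d' ltac:(lia).
    have [L2 G2] := HA 0 (leq0n _).
    have -> : zeros (jj 0 d'.+1) ++ Y 0 ++ true :: zeros (d'.+2 - jj 0 d'.+1) =
              (zeros d' ++ zo 1) ++ [:: false].
      rewrite /jj /=; have -> : d'.+2 - d'.+1 = 1 by lia.
      by rewrite -catA catzS.
    eexists; apply: (composeG Hn Hk G1 G2).
    by right; exists d'.+1.
  have [_ [L1 G1']] := IH (N - 2) ltac:(lia) K' d ltac:(lia).
  have G1 : Good (N - 2) (Fn (N - 2) (K'.+2 - 1)) (zeros d ++ zo K'.+1) L1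
     (zeros (jj K' d) ++ Y K' ++ true :: zeros (d.+1 - jj K' d)).
    by have -> : K'.+2 - 1 = K'.+1 by lia.
  have Hj : jj K' d <= d by rewrite /jj; case: ifP; lia.
  have Htr : forall x1, x1 = zeros (jj K' d) ++ Y K'.+1 ++ true :: zeros (d - jj K' d) ->
     ((exists y t, zeros (jj K' d) ++ Y K' ++ true :: zeros (d.+1 - jj K' d) =
         y ++ true :: false :: zeros t /\
       x1 ++ [:: false] = W (y ++ [:: true; false]) true t false) \/
      (exists a, zeros (jj K' d) ++ Y K' ++ true :: zeros (d.+1 - jj K' d) = zeros a /\
       x1 ++ [:: false] = W [::] true a false)).
    move=> x1 ->; left; exists (zeros (jj K' d) ++ Y K'), (d - jj K' d); split.
      have -> : d.+1 - jj K' d = (d - jj K' d).+1 by lia.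
      by rewrite catA.
    by rewrite /W -!catA [(true :: zeros _) ++ _]cat_cons YS'.
  case: d EN B01 G1 G1' Hj Htr => [|d'] EN B01 G1 G1' Hj Htr.
    have G2 := @single_tzo (N - 1) K'.+1 ltac:(lia).
    have -> : zeros (jj K'.+1 0) ++ Y K'.+1 ++ true :: zeros (1 - jj K'.+1 0) =
              (true :: zo K'.+1) ++ [:: false].
      by rewrite /jj if_same tzoY -catA.
    eexists; apply: (composeG Hn Hk G1 G2); apply: Htr.
    by rewrite /jj if_same tzoY.
  case Hodd: (odd K'.+1).
    have [_ [L2 G2]] := IH (N - 1) ltac:(lia) K'.+1 d' ltac:(lia).
    have E1 : jj K'.+1 d' = 0 by rewrite /jj oddS Hodd.
    have E2 : jj K'.+1 d'.+1 = 0 by rewrite /jj oddS Hodd.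
    have E3 : jj K' d'.+1 = d'.+1 by rewrite /jj Hodd.
    rewrite E1 in G2; rewrite E2.
    have -> : zeros 0 ++ Y K'.+1 ++ true :: zeros (d'.+2 - 0) =
              (zeros 0 ++ Y K'.+1 ++ true :: zeros (d'.+1 - 0)) ++ [:: false].
      by rewrite !subn0 zerosSr -!catA.
    eexists; apply: (composeG Hn Hk G1 G2); apply: Htr.
    by rewrite E3 subnn (zoS K'.+1) tzoY catzS.
  have [HA _] := IH (N - 1) ltac:(lia) K'.+1 d' ltac:(lia).
  have [L2 G2] := HA 0 (leq0n _).
  have E2 : jj K'.+1 d'.+1 = d'.+1 by rewrite /jj oddS Hodd.
  have E3 : jj K' d'.+1 = 0 by rewrite /jj Hodd.
  rewrite E2.
  have -> : zeros d'.+1 ++ Y K'.+1 ++ true :: zeros (d'.+2 - d'.+1) =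
            (zeros d' ++ zo K'.+2) ++ [:: false].
    have -> : d'.+2 - d'.+1 = 1 by lia.
    by rewrite (zoS K'.+1) tzoY catzS -!catA.
  eexists; apply: (composeG Hn Hk G1 G2); apply: Htr.
  by rewrite E3.
Qed.

Unset Implicit Arguments.

Lemma Good_props n k a L z : Good n (Fn n k) a L z ->
  [/\ calF n k a = L, (forall w, Fn n k w -> w \in L), suffix_partitioned L & last [::] L = z].
Proof.
move=> G; have G' := G; case: G' => /and3P[/eqP Hs _ _] _ C P [E _].
by split => //; apply: Good_calF G Hs.
Qed.

Theorem theorem2 (n k : nat) :
  1 <= n -> 1 <= k -> 2 * k <= n ->
  (forall i, i <= n - 2 * k ->
     [/\ (forall w, Fn n k w -> w \in calF n k (alpha n k i)),
         suffix_partitioned (calF n k (alpha n k i)) &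
         last [::] (calF n k (alpha n k i)) = gamma n k])
  /\
  [/\ (forall w, Fn n k w -> w \in calF n k (gamma n k)),
      suffix_partitioned (calF n k (gamma n k)) &
      last [::] (calF n k (gamma n k)) =
        (if odd k then alpha n k (n - 2 * k) else alpha n k 0)].
Proof.
move=> Hn Hk Hkn.
case: k Hk Hkn => // K _ Hkn.
have [d Ed] : exists d, n = 2 * K.+1 + d by exists (n - 2 * K.+1); lia.
subst n.
have -> : 2 * K.+1 + d - 2 * K.+1 = d by lia.
have [HA HG] := mainN (erefl (2 * K.+1 + d)).
have Halpha : forall i, alpha (2 * K.+1 + d) K.+1 i = zeros i ++ Y K ++ true :: zeros (d.+1 - i).
  by move=> i; rewrite alphaE alpY.
have Hgamma : gamma (2 * K.+1 + d) K.+1 = zeros d ++ zo K.+1 by rewrite gammaE.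
split.
  move=> i Hi; rewrite Halpha Hgamma.
  have [L G] := HA i Hi.
  by have [-> C P E] := @Good_props _ _ _ _ _ G.
rewrite Hgamma; have [L G] := HG.
have [-> C P E] := @Good_props _ _ _ _ _ G; split => //.
by rewrite E /jj !Halpha; case: ifP.
Qed.
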